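(* Let $d\ge 3$. Every unfolded simplicial $d$-manifold that is not a single $d$-simplex has an even scaffold.
   Context: A simplicial $d$-manifold is a finite simplicial complex homeomorphic to a $d$-dimensional manifold, possibly with boundary; its $d$-simplices are called facets and its $(d-1)$-simplices ridges. The dual $1$-skeleton $\mathcal{M}^*$ has a node for each facet and an arc between two facets sharing a ridge. A simplicial manifold is unfolded if its dual $1$-skeleton is a tree. The (vertex-facet) incidence graph has a node for every vertex and every facet, with an arc $(v,f)$ whenever $v$ is a vertex of $f$. An even scaffold is a subgraph of the incidence graph containing every facet node, in which every facet node has degree exactly $2$ and every vertex node has even degree. (The empty complex has the empty even scaffold.) *)

(* Defs.v *)
From HB Require Import structures.
From mathcomp Require Import all_boot all_order all_algebra.
From mathcomp Require Import all_classical all_reals topology normedtype.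

Set Implicit Arguments.
Unset Strict Implicit.
Unset Printing Implicit Defensive.

Import Order.TTheory GRing.Theory Num.Theory.
Import numFieldNormedType.Exports.
Local Open Scope classical_set_scope.
Local Open Scope ring_scope.

Definition simplicial_complex (n : nat) (K : {set {set 'I_n}}) : Prop :=
  finset.set0 \notin K /\
  forall s t : {set 'I_n}, s \in K -> t \subset s -> t != finset.set0 -> t \in K.

Definition facets (n d : nat) (K : {set {set 'I_n}}) : {set {set 'I_n}} :=
  [set s in K | #|s| == d.+1]%N.
Definition ridges (n d : nat) (K : {set {set 'I_n}}) : {set {set 'I_n}} :=
  [set s in K | #|s| == d]%N.

(** Standard geometric realization in R^n (barycentric coordinates). *)
Definition realization (R : realType) (n : nat) (K : {set {set 'I_n}})
  : set 'rV[R]_n :=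
  [set x | (forall i, 0 <= x ord0 i) /\ (\sum_i x ord0 i = 1) /\
           exists2 s, s \in K & forall i, i \notin s -> x ord0 i = 0].

Definition halfspace (R : realType) (d : nat) : set 'rV[R]_d :=
  [set y | forall i : 'I_d, nat_of_ord i = 0%N -> 0 <= y ord0 i].

Definition homeomorphic (T1 T2 : topologicalType) (A : set T1) (B : set T2) : Prop :=
  exists (f : T1 -> T2) (g : T2 -> T1),
    (forall x, A x -> B (f x)) /\ (forall y, B y -> A (g y)) /\
    (forall x, A x -> g (f x) = x) /\ (forall y, B y -> f (g y) = y) /\
    {within A, continuous f} /\ {within B, continuous g}.

Definition manifold_with_boundary (R : realType) (d : nat) (T : topologicalType)
  (X : set T) : Prop :=
  forall p, X p -> exists (W : set T) (O : set 'rV[R]_d),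
    open W /\ W p /\ open O /\
    homeomorphic (X `&` W) (@halfspace R d `&` O).

Definition simplicial_manifold (R : realType) (n d : nat) (K : {set {set 'I_n}}) : Prop :=
  simplicial_complex K /\ @manifold_with_boundary R d _ (@realization R n K).

Definition dual_adj (n d : nat) (K : {set {set 'I_n}}) : rel {set 'I_n} :=
  fun f g => [&& f \in facets d K, g \in facets d K, f != g &
                 (f :&: g) \in ridges d K].

Definition is_tree (T : finType) (N : {set T}) (e : rel T) : Prop :=
  (forall x y, x \in N -> y \in N -> connect e x y) /\
  (forall p : seq T, ucycle e p -> (size p < 3)%N).

Definition unfolded (n d : nat) (K : {set {set 'I_n}}) : Prop :=
  is_tree (facets d K) (dual_adj d K).

Definition even_scaffold (n d : nat) (K : {set {set 'I_n}})
  (E : {set 'I_n * {set 'I_n}}) : Prop :=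
  (forall v f, (v, f) \in E -> [/\ [set v]%SET \in K, f \in facets d K & v \in f]) /\
  (forall f, f \in facets d K -> #|[set v | (v, f) \in E]| = 2%N) /\
  (forall v, [set v]%SET \in K -> ~~ odd #|[set f | (v, f) \in E]|).

(* Main.v *)
Require Import Defs.
From mathcomp Require Import all_boot all_order all_algebra.
From mathcomp Require Import all_classical all_reals topology normedtype.
From mathcomp Require Import zify.
Set Implicit Arguments.
Unset Strict Implicit.

Definition good {n : nat} (S : {set {set 'I_n}}) (p : {set 'I_n} -> {set 'I_n}) : Prop :=
  (forall h, h \in S -> p h \subset h /\ #|p h| = 2%N) /\
  forall v : 'I_n, ~~ odd (\sum_(h in S) (v \in p h))%N.

Lemma good_eq n (A B : {set {set 'I_n}}) p : (forall h, (h \in A) = (h \in B)) -> good A p -> good B p.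
Proof.
move=> eAB [H1 H2]; split.
  by move=> h; rewrite -eAB; apply: H1.
by move=> v; rewrite -(eq_bigl _ _ eAB).
Qed.

Lemma good0 n : good (finset.set0 : {set {set 'I_n}}) (fun _ => finset.set0).
Proof. by split=> [h|v]; rewrite ?inE ?big_set0. Qed.

Lemma good_pair n (a b P : {set 'I_n}) : a != b -> P \subset a -> P \subset b ->
  #|P| = 2%N -> good [set a; b] (fun _ => P).
Proof.
move=> ab Pa Pb P2; split.
  by move=> h; rewrite !inE => /orP[]/eqP->.
by move=> v; rewrite big_setU1 ?inE // big_set1 /=; case: (v \in P).
Qed.
Lemma good_comb n (A B : {set {set 'I_n}}) pA pB : [disjoint A & B] ->
  good A pA -> good B pB -> good (A :|: B) (fun h => if h \in A then pA h else pB h).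
Proof.
move=> dAB [A1 A2] [B1 B2]; split.
  move=> h; rewrite inE; case hA: (h \in A) => /= hB; first exact: A1.
  exact: B1.
move=> v; rewrite (eq_bigl [predU A & B]); last by move=> h; rewrite !inE.
rewrite bigU //=.
have e1 : (\sum_(h in A) (v \in (if h \in A then pA h else pB h)))%N =
          (\sum_(h in A) (v \in pA h))%N by apply: eq_bigr => h ->.
have e2 : (\sum_(h in B) (v \in (if h \in A then pA h else pB h)))%N =
          (\sum_(h in B) (v \in pB h))%N.
  by apply: eq_bigr => h hB; rewrite (disjointFl dAB hB).
by rewrite e1 e2 oddD (negbTE (A2 v)) (negbTE (B2 v)).
Qed.

Lemma facet_card n d (K : {set {set 'I_n}}) f : f \in facets d K -> #|f| = d.+1.
Proof. by rewrite inE => /andP[_ /eqP]. Qed.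

Lemma adjP n d (K : {set {set 'I_n}}) f g : dual_adj d K f g ->
  [/\ f \in facets d K, g \in facets d K, f != g & #|f :&: g| = d].
Proof.
rewrite /dual_adj => /and4P[ff fg fng].
by rewrite inE => /andP[_ /eqP].
Qed.

Lemma adj_sym n d (K : {set {set 'I_n}}) f g : dual_adj d K f g = dual_adj d K g f.
Proof.
by rewrite /dual_adj finset.setIC eq_sym; case: (f \in _); case: (g \in _).
Qed.

Lemma inter_big n d (c r1 r2 : {set 'I_n}) : #|c| = d.+1 -> r1 \subset c -> r2 \subset c ->
  #|r1| = d -> #|r2| = d -> (d.-1 <= #|r1 :&: r2|)%N.
Proof.
move=> hc s1 s2 h1 h2.
have := cardsUI r1 r2.
have : (#|r1 :|: r2| <= #|c|)%N by apply: subset_leq_card; rewrite finset.subUset s1 s2.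
lia.
Qed.

Lemma pick2 (T : finType) (A : {set T}) : (2 <= #|A|)%N ->
  exists x y, [/\ x \in A, y \in A & x != y].
Proof.
move=> h.
have : (0 < #|A|)%N by lia.
rewrite card_gt0 => /set0Pn[x xA].
have : (0 < #|A :\ x|)%N by move: h; rewrite (cardsD1 x A) xA; lia.
rewrite card_gt0 => /set0Pn[y]; rewrite !inE => /andP[yx yA].
by exists x, y; rewrite xA yA eq_sym yx.
Qed.

Lemma pick3 (T : finType) (A : {set T}) x y : (3 <= #|A|)%N ->
  exists z, [/\ z \in A, z != x & z != y].
Proof.
move=> h.
have : ~~ (A \subset [set x; y]).
  apply/negP => /subset_leq_card; rewrite cards2; case: (x != y) => /=; lia.
case/subsetPn => z zA; rewrite !inE negb_or => /andP[zx zy].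
by exists z.
Qed.

Lemma common2 n d (K : {set {set 'I_n}}) c l1 l2 : (3 <= d)%N ->
  dual_adj d K c l1 -> dual_adj d K c l2 ->
  exists a b, [/\ a != b, [set a; b] \subset c, [set a; b] \subset l1 & [set a; b] \subset l2].
Proof.
move=> d3 /adjP[fc _ _ h1] /adjP[_ _ _ h2].
have := inter_big (facet_card fc) (finset.subsetIl c l1) (finset.subsetIl c l2) h1 h2.
move=> hi.
have [a [b [aI bI ab]]] : exists a b, [/\ a \in (c :&: l1) :&: (c :&: l2), b \in (c :&: l1) :&: (c :&: l2) & a != b].
  by apply: pick2; lia.
move: aI bI => /setIP[/setIP[ac al1] /setIP[_ al2]] /setIP[/setIP[bc bl1] /setIP[_ bl2]].
by exists a, b; rewrite !finset.subUset !finset.sub1set ac bc al1 bl1 al2 bl2.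
Qed.

Lemma star n d (K : {set {set 'I_n}}) : (3 <= d)%N -> forall k c (L : {set {set 'I_n}}),
  #|L| = k.+1 -> c \notin L -> (forall l, l \in L -> dual_adj d K c l) ->
  exists p, good (c |: L) p.
Proof.
move=> d3; elim/ltn_ind => k IH c L hL cL adjL.
case: k IH hL => [|[|k]] IH hL.
- have /cards1P[l eL] : #|L| == 1%N by rewrite hL.
  subst L; have al := adjL l (set11 l).
  have [a [b [ab sc sl _]]] := common2 d3 al al.
  exists (fun _ => [set a; b]); apply: good_pair => //.
    by case/adjP: al.
  by rewrite cards2 ab.
- have /cards2P[l1 [l2 [l12 eL]]] : #|L| == 2%N by rewrite hL.
  subst L.
  have a1 := adjL l1 (setU11 _ _).
  have a2 : dual_adj d K c l2 by apply: adjL; rewrite !inE eqxx orbT.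
  have [a [b [ab sc sl1 sl2]]] := common2 d3 a1 a2.
  have [_ _ _ h2] := adjP a2.
  have [c0 [c0I c0a c0b]] := @pick3 _ (c :&: l2) a b ltac:(lia).
  move: c0I => /setIP[c0c c0l2].
  move: sc sl1 sl2; rewrite !finset.subUset !finset.sub1set => /andP[ac bc] /andP[al1 bl1] /andP[al2 bl2].
  exists (fun h => if h == c then [set b; c0] else if h == l1 then [set a; b] else [set a; c0]).
  move: cL; rewrite !inE negb_or => /andP[cl1 cl2].
  split.
    move=> h; rewrite !inE => /or3P[]/eqP->.
    + rewrite eqxx finset.subUset !finset.sub1set bc c0c cards2 eq_sym c0b; split => //.
    + rewrite eq_sym (negbTE cl1) eqxx finset.subUset !finset.sub1set al1 bl1 cards2 ab; split => //.
    + rewrite (eq_sym l2 c) (negbTE cl2) (eq_sym l2 l1) (negbTE l12) finset.subUset !finset.sub1set al2 c0l2 cards2 eq_sym c0a.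
      by [].
  move=> v.
  rewrite big_setU1 ?inE ?negb_or ?cl1 ?cl2 // big_setU1 ?inE // big_set1 /=.
  rewrite eqxx (eq_sym l1 c) (negbTE cl1) eqxx (eq_sym l2 c) (negbTE cl2) (eq_sym l2 l1) (negbTE l12).
  rewrite !inE.
  have [->|va] := eqVneq v a.
    by rewrite (negbTE ab) (eq_sym a c0) (negbTE c0a).
  have [->|vb] := eqVneq v b.
    by rewrite (eq_sym b c0) (negbTE c0b).
  by case: (v == c0).
- have [l1 [l2 [l1L l2L l12]]] := @pick2 _ L ltac:(lia).
have [a [b [ab _ sl1 sl2]]] := common2 d3 (adjL l1 l1L) (adjL l2 l2L).
set L' := L :\ l1 :\ l2.
have hL' : #|L'| = k.+1.
  move: hL; rewrite (cardsD1 l1 L) (cardsD1 l2 (L :\ l1)) l1L !inE eq_sym l12 l2L /=.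
  rewrite /L'; lia.
have [p1 g1] : exists p, good (c |: L') p.
  apply: (IH k) => //.
    by move: cL; rewrite /L' !inE; apply: contra => /andP[_ /andP[_ ->]].
  by move=> l; rewrite /L' !inE => /andP[_ /andP[_ /adjL]].
have g2 := good_pair l12 sl1 sl2 ltac:(by rewrite cards2 ab).
have dj : [disjoint c |: L' & [set l1; l2]].
  rewrite -setI_eq0; apply/eqP/setP => h; rewrite !inE.
  have [->|hl1] := eqVneq h l1.
    by rewrite /= ?andbF ?orbF ?andbT ?orbT; apply/negP => /eqP cl; move: cL; rewrite -cl l1L.
  have [->|hl2] := eqVneq h l2; last by rewrite /= !andbF.
  by rewrite /= ?andbF ?orbF ?andbT ?orbT; apply/negP => /eqP cl; move: cL; rewrite -cl l2L.
exists (fun h => if h \in c |: L' then p1 h else [set a; b]).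
apply: (good_eq _ (good_comb dj g1 g2)) => h; rewrite !inE.
have [->|hl1] := eqVneq h l1; first by rewrite l1L !orbT.
have [->|hl2] := eqVneq h l2; first by rewrite l2L !orbT.
by rewrite /= !orbF.
Qed.


Lemma star' n d (K : {set {set 'I_n}}) c (L : {set {set 'I_n}}) : (3 <= d)%N ->
  c \notin L -> L != finset.set0 -> (forall l, l \in L -> dual_adj d K c l) ->
  exists p, good (c |: L) p.
Proof.
move=> d3 cL L0 adjL.
apply: (@star n d K d3 (#|L|.-1)) => //.
by move: L0; rewrite -card_gt0; case: #|L|.
Qed.

Lemma finish n (S S'' Y : {set {set 'I_n}}) p q : S'' \subset S ->
  (forall h, (h \in Y) = (h \in S) && (h \notin S'')) ->
  good S'' p -> good Y q -> exists p, good S p.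
Proof.
move=> sub memY g1 g2.
have dj : [disjoint S'' & Y].
  rewrite -setI_eq0; apply/eqP/setP => h; rewrite !inE memY.
  by case: (h \in S''); rewrite ?andbF.
eexists; apply: (good_eq _ (good_comb dj g1 g2)) => h; rewrite !inE memY.
case hS'': (h \in S''); rewrite /= ?andbT //.
by rewrite (fintype.subsetP sub _ hS'').
Qed.

Lemma main n d (K : {set {set 'I_n}}) : (3 <= d)%N -> forall k (S : {set {set 'I_n}}),
  (#|S| <= k)%N -> (forall f, f \in S -> exists2 g, g \in S & dual_adj d K f g) ->
  exists p, good S p.
Proof.
move=> d3; elim=> [|k IH] S hS HS.
  have S0 : S = finset.set0 by apply/cards0_eq; lia.
  by rewrite S0; exists (fun _ => finset.set0); apply: good0.
case: (set_0Vmem S) => [->|[f fS]].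
  by exists (fun _ => finset.set0); apply: good0.
have [g gS fg] := HS f fS.
have [_ _ fng _] := adjP fg.
pose S' := S :\ f :\ g.
pose I := [set h in S' | [forall h', (h' \in S') ==> ~~ dual_adj d K h h']].
pose If := [set h in I | dual_adj d K f h].
pose Ig := I :\: If.
pose S'' := S' :\: I.
have inS' h : (h \in S') = [&& h != g, h != f & h \in S] by rewrite !inE.
have IS' h : h \in I -> h \in S' by rewrite inE => /andP[].
have Iadj h : h \in I -> h \in S /\ forall h', h' \in S' -> ~~ dual_adj d K h h'.
  rewrite inE => /andP[hS' /forallP H]; split.
    by move: hS'; rewrite inS' => /and3P[].
  by move=> h' h'S; move: (H h'); rewrite h'S.
have Ifg h : h \in I -> dual_adj d K h f \/ dual_adj d K h g.
  move=> hI; have [hhS H] := Iadj h hI.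
  have [h' h'S hh'] := HS h hhS.
  have : h' \notin S' by apply: contraL hh'; apply: H.
  rewrite inS' h'S andbT negb_and !negbK => /orP[]/eqP<-; by [right|left].
have Igg h : h \in Ig -> dual_adj d K g h.
  rewrite inE => /andP[hIf hI].
  case: (Ifg h hI) => hadj; last by rewrite adj_sym.
  by move: hIf; rewrite inE hI adj_sym hadj.
have IfI h : h \in If -> h \in I by rewrite inE => /andP[].
have Iff h : h \in If -> dual_adj d K f h by rewrite inE => /andP[].
have gnI : g \notin I by apply: contraL gS => /IS'; rewrite inS' eqxx.
have fnI : f \notin I by apply: contraL fS => /IS'; rewrite inS' eqxx andbF.
have sub : S'' \subset S by apply/fintype.subsetP => h; rewrite !inE => /andP[_ /and3P[]].
have memX h : (h \in S) && (h \notin S'') = [|| h == f, h == g | h \in I].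
  have [->|hf] := eqVneq h f; first by rewrite fS !inE eqxx /= !andbF.
  have [->|hg] := eqVneq h g; first by rewrite gS !inE eqxx /= ?andbF ?orbT.
  rewrite finset.in_setD inS' hf hg /=.
  case hI: (h \in I); first by rewrite (proj1 (Iadj h hI)).
  by rewrite /= ?andbT ?andbN; case: (h \in S).
have [p'' g''] : exists p, good S'' p.
  apply: IH.
    have : (#|S''| < #|S|)%N.
      apply: proper_card; apply/properP; split => //.
      by exists f => //; rewrite !inE eqxx /= andbF.
    lia.
  move=> h; rewrite finset.in_setD => /andP[hnI hS'].
  have : ~~ [forall h', (h' \in S') ==> ~~ dual_adj d K h h'].
    by move: hnI; rewrite inE hS'.
  case/forallPn => h'; rewrite negb_imply negbK => /andP[h'S hh'].
  exists h' => //.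
  rewrite finset.in_setD h'S andbT; apply/negP => /Iadj[_ /(_ h hS')].
  by rewrite adj_sym hh'.
have gf : g != f by rewrite eq_sym.
case: (eqVneq If finset.set0) => [If0|If0].
  have [q gq] : exists q, good (g |: (f |: Ig)) q.
    apply: (star' (K:=K) d3).
    - rewrite !finset.in_setU1 negb_or gf /= finset.in_setD negb_and gnI /=. by rewrite orbT.
    - by apply/set0Pn; exists f; rewrite !inE eqxx.
    move=> l; rewrite finset.in_setU1 => /orP[/eqP->|]; first by rewrite adj_sym.
    exact: Igg.
  apply: (finish sub _ g'' gq) => h.
  rewrite memX !finset.in_setU1 finset.in_setD; case: (h == f); case: (h == g); rewrite /= ?orbT //=.
  by rewrite If0 inE.
case: (eqVneq Ig finset.set0) => [Ig0|Ig0].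
  have [q gq] : exists q, good (f |: (g |: If)) q.
    apply: (star' (K:=K) d3).
    - rewrite !finset.in_setU1 negb_or fng /=; apply: contra fnI; exact: IfI.
    - by apply/set0Pn; exists g; rewrite finset.in_setU1 eqxx.
    move=> l; rewrite finset.in_setU1 => /orP[/eqP->|]; first exact: fg.
    exact: Iff.
  apply: (finish sub _ g'' gq) => h.
  rewrite memX !finset.in_setU1; case: (h == f); case: (h == g); rewrite /= ?orbT //=.
  case hIf: (h \in If); first by rewrite (IfI h hIf).
  case hI: (h \in I) => //.
  have : h \in Ig by rewrite finset.in_setD hIf hI.
  by rewrite Ig0 inE.
have [q1 gq1] : exists q, good (f |: If) q.
  apply: (star' (K:=K) d3) => //.
  by apply: contra fnI; exact: IfI.
have [q2 gq2] : exists q, good (g |: Ig) q.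
  apply: (star' (K:=K) d3) => //.
  by apply: contra gnI; rewrite finset.in_setD => /andP[].
have dj : [disjoint f |: If & g |: Ig].
  rewrite -setI_eq0; apply/eqP/setP => h; rewrite finset.in_set0; apply/negP.
  move=> /setIP[/setU1P[->|hIf] /setU1P[e|hIg]].
  - by move: fng; rewrite e eqxx.
  - by move: fnI; move: hIg; rewrite finset.in_setD => /andP[_ ->].
  - by move: gnI; rewrite -e (IfI h hIf).
  - by move: hIg; rewrite finset.in_setD hIf.
have gq := good_comb dj gq1 gq2.
apply: (finish sub _ g'' gq) => h.
rewrite memX finset.in_setU !finset.in_setU1 finset.in_setD.
case: (h == f); case: (h == g); rewrite /= ?orbT //=.
case hIf: (h \in If); [by rewrite (IfI h hIf)|done].
Qed.

Theorem lemma6 (R : realType) (n d : nat) (K : {set {set 'I_n}}) :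
  (3 <= d)%N ->
  simplicial_manifold R d K ->
  unfolded d K ->
  #|facets d K| <> 1%N ->
  exists E : {set 'I_n * {set 'I_n}}, even_scaffold d K E.
Proof.
move=> d3 [[K0 Kcl] _] [conn _] nf1.
have [p [gp1 gp2]] : exists p, good (facets d K) p.
  apply: (main (K:=K) d3 (k:=#|facets d K|)) => // f ff.
  have c2 : (2 <= #|facets d K|)%N.
    have : (0 < #|facets d K|)%N by rewrite card_gt0; apply/set0Pn; exists f.
    lia.
  have [g [gF gf]] : exists g, g \in facets d K /\ g != f.
    have [x [y [xF yF xy]]] := pick2 c2.
    have [xf|xf] := eqVneq x f; last by exists x.
    by exists y; split => //; rewrite -xf eq_sym.
  case/connectP: (conn f g ff gF) => s.
  case: s => [|h s] /=; first by move=> _ e; move: gf; rewrite e eqxx.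
  move=> /andP[fh _] _; exists h => //.
  by case/adjP: fh.
exists [set x : 'I_n * {set 'I_n} | (x.2 \in facets d K) && (x.1 \in p x.2)].
split; [|split].
- move=> v f; rewrite inE /= => /andP[ff vp].
  have [sub _] := gp1 f ff.
  have vf : v \in f by apply: (fintype.subsetP sub).
  split => //.
  have fK : f \in K by move: ff; rewrite inE => /andP[].
  apply: (Kcl f) => //; first by rewrite finset.sub1set.
  by apply/set0Pn; exists v; rewrite finset.in_set1.
- move=> f ff.
  apply: etrans (gp1 f ff).2; apply: eq_card => v; rewrite unfold_in /in_set /= asboolb. rewrite finset.in_set /=  ff.
  by [].
- move=> v _.
  have e : #|[pred h | (h \in facets d K) && (v \in p h)]| = (\sum_(h in facets d K) (v \in p h))%N.
    rewrite -sum1_card (eq_bigl (fun h => (h \in facets d K) && (v \in p h))) //.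
    rewrite big_mkcondr /=; apply: eq_bigr => h _; by case: (v \in p h).
  move: (gp2 v); rewrite -e; congr (~~ odd _); apply: eq_card => h; rewrite [RHS]unfold_in /in_set /= asboolb !inE /=.
  by [].
Qed.
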